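(* Let $\mu$ be a positive Borel measure on $\mathbb{R}$, absolutely continuous with respect to Lebesgue measure, with finite moments of all orders, supported on a set $E$ with infinitely many points, let $c\in\mathbb{R}\setminus E$, $N>0$, and assume $\mu$ is classical or semi-classical, so that its monic orthogonal polynomials satisfy $xP_n=P_{n+1}+\beta_nP_n+\gamma_nP_{n-1}$ and a structure relation $\sigma(x)P_n'(x)=a(x;n)P_n(x)+b(x;n)P_{n-1}(x)$ with polynomials $\sigma$, $a(x;n)$, $b(x;n)$ whose degrees do not depend on $n$. With $\Lambda_n^c$ as in the context, define $$B_2(x;n)=\Lambda_{n-1}^c\Big(\frac{1}{\Lambda_{n-1}^c}+\frac{x-\beta_{n-1}}{\gamma_{n-1}}\Big),\qquad \Delta(x;n)=B_2(x;n)+\frac{\Lambda_n^c\Lambda_{n-1}^c}{\gamma_{n-1}},$$ $$C_1(x;n)=\frac{1}{\sigma(x)}\Big(a(x;n)-\Lambda_n^c\frac{b(x;n-1)}{\gamma_{n-1}}\Big),\qquad D_1(x;n)=\frac{1}{\sigma(x)}\Big(b(x;n)+\Lambda_n^c\,b(x;n-1)\Big(\frac{a(x;n-1)}{b(x;n-1)}+\frac{x-\beta_{n-1}}{\gamma_{n-1}}\Big)\Big),$$ $$C_2(x;n)=\frac{-\Lambda_{n-1}^c}{\sigma(x)}\Big(\frac{a(x;n)}{\gamma_{n-1}}+\frac{b(x;n-1)}{\gamma_{n-1}}\Big(\frac{1}{\Lambda_{n-1}^c}+\frac{x-\beta_{n-1}}{\gamma_{n-1}}\Big)\Big),$$ $$D_2(x;n)=\frac{\Lambda_{n-1}^c}{\sigma(x)}\Big[\frac{\sigma(x)-b(x;n)}{\gamma_{n-1}}+b(x;n-1)\Big(\frac{a(x;n-1)}{b(x;n-1)}+\frac{x-\beta_{n-1}}{\gamma_{n-1}}\Big)\Big(\frac{1}{\Lambda_{n-1}^c}+\frac{x-\beta_{n-1}}{\gamma_{n-1}}\Big)\Big],$$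 and for $k=1,2$ $$\xi_k^c(x;n)=\frac{C_k(x;n)B_2(x;n)\gamma_{n-1}+D_k(x;n)\Lambda_{n-1}^c}{\Delta(x;n)\gamma_{n-1}},\qquad \eta_k^c(x;n)=\frac{D_k(x;n)-C_k(x;n)\Lambda_n^c}{\Delta(x;n)}.$$ Then $\deg\Delta(x;n)=1$, and the differential operators $\mathfrak a_n=-\xi_1^c(x;n)\mathrm I+\mathrm D_x$ and $\mathfrak a_n^\dagger=-\eta_2^c(x;n)\mathrm I+\mathrm D_x$ ($\mathrm I$ the identity, $\mathrm D_x$ the derivative) satisfy $$\mathfrak a_n[Q_n^{c,N}(x)]=\eta_1^c(x;n)\,Q_{n-1}^{c,N}(x),\qquad \mathfrak a_n^\dagger[Q_{n-1}^{c,N}(x)]=\xi_2^c(x;n)\,Q_n^{c,N}(x),$$ i.e. they are lowering and raising operators for $\{Q_n^{c,N}\}$.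
   Context: $\{P_n\}$ is the monic orthogonal polynomial sequence (MOPS) for $\mu$, $\|f\|_\mu^2=\int f^2d\mu$; $\{Q_n^c\}$ is the MOPS for $\langle f,g\rangle_\nu=\int fg\frac{1}{x-c}d\mu$; $\{Q_n^{c,N}\}$ is the MOPS for $\langle f,g\rangle_{\nu_N}=\int fg\frac{1}{x-c}d\mu+Nf(c)g(c)$. $\Lambda_n^c=\frac{\pi_{n-1}-r_{n-1}}{1+NB_n^c}-\pi_{n-1}$, where $\pi_{n-1}=P_n(c)/P_{n-1}(c)$, $r_{n-1}=F_n(c)/F_{n-1}(c)$ with $F_n(s)=\int\frac{P_n(x)}{x-s}d\mu(x)$, $F_{-1}=1$, and $B_n^c=\frac{-Q_n^c(c)P_{n-1}(c)}{\|P_{n-1}\|_\mu^2}$; it is the constant with $Q_n^{c,N}=P_n+\Lambda_n^cP_{n-1}$. The statement concerns indices $n$ for which all displayed quantities are defined. *)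

(* Defs.v *)
From HB Require Import structures.
From mathcomp Require Import all_boot all_order all_algebra.
From mathcomp Require Import all_classical all_reals all_analysis.
Set Implicit Arguments. Unset Strict Implicit. Unset Printing Implicit Defensive.
Import Order.TTheory GRing.Theory Num.Theory.
Import numFieldNormedType.Exports.
Local Open Scope classical_set_scope.
Local Open Scope ring_scope.

Section Defs.
Variable R : realType.
Implicit Types (mu : {measure set R -> \bar R}) (p q : {poly R}).

Definition msupp mu : set R :=
  [set x | forall e : R, 0 < e -> (0 < mu (ball x e))%E].

Definition ip_mu mu p q : R := Rintegral mu setT (fun x => p.[x] * q.[x]).

Definition ip_nu mu (c : R) p q : R :=
  Rintegral mu setT (fun x => p.[x] * q.[x] / (x - c)).

Definition ip_nuN mu (c N : R) p q : R :=
  ip_nu mu c p q + N * p.[c] * q.[c].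

Definition is_MOPS (ip : {poly R} -> {poly R} -> R) (Q : nat -> {poly R}) :=
  forall n, [/\ Q n \is monic, size (Q n) = n.+1, ip (Q n) (Q n) != 0
              & forall m, (m < n)%N -> ip (Q n) (Q m) = 0].

Definition Fst mu (P : nat -> {poly R}) (n : nat) (s : R) : R :=
  Rintegral mu setT (fun x => (P n).[x] / (x - s)).

(* F_{k-1}(s) with the convention F_{-1} = 1 *)
Definition Fm1 mu (P : nat -> {poly R}) (k : nat) (s : R) : R :=
  if k is k'.+1 then Fst mu P k' s else 1.

Definition Bc mu (P Qc : nat -> {poly R}) (c : R) (n : nat) : R :=
  - (Qc n).[c] * (P n.-1).[c] / ip_mu mu (P n.-1) (P n.-1).

Definition Lambda mu (P Qc : nat -> {poly R}) (c N : R) (n : nat) : R :=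
  let pi := (P n).[c] / (P n.-1).[c] in
  let r := Fst mu P n c / Fm1 mu P n c in
  (pi - r) / (1 + N * Bc mu P Qc c n) - pi.

(* Parameters: Ln = Lambda_n^c, Lm = Lambda_{n-1}^c, bt = beta_{n-1},
   gm = gamma_{n-1}, sg = sigma(x), an = a(x;n), am = a(x;n-1),
   bn = b(x;n), bm = b(x;n-1). *)
Definition B2f (Lm bt gm x : R) : R := Lm * (1 / Lm + (x - bt) / gm).

Definition Deltaf (Ln Lm bt gm x : R) : R := B2f Lm bt gm x + Ln * Lm / gm.

Definition DeltaP (Ln Lm bt gm : R) : {poly R} :=
  Lm%:P * ((1 / Lm)%:P + ('X - bt%:P) * (gm^-1)%:P) + (Ln * Lm / gm)%:P.

Definition C1f (Ln gm sg an bm : R) : R := 1 / sg * (an - Ln * bm / gm).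

Definition D1f (Ln bt gm sg bn am bm x : R) : R :=
  1 / sg * (bn + Ln * bm * (am / bm + (x - bt) / gm)).

Definition C2f (Lm bt gm sg an bm x : R) : R :=
  - Lm / sg * (an / gm + bm / gm * (1 / Lm + (x - bt) / gm)).

Definition D2f (Lm bt gm sg bn am bm x : R) : R :=
  Lm / sg * ((sg - bn) / gm
             + bm * (am / bm + (x - bt) / gm) * (1 / Lm + (x - bt) / gm)).

Definition xif (Ck Dk Ln Lm bt gm x : R) : R :=
  (Ck * B2f Lm bt gm x * gm + Dk * Lm) / (Deltaf Ln Lm bt gm x * gm).

Definition etaf (Ck Dk Ln Lm bt gm x : R) : R :=
  (Dk - Ck * Ln) / Deltaf Ln Lm bt gm x.

End Defs.

(* Main.v *)
Require Import Defs.
From HB Require Import structures.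
From mathcomp Require Import all_boot all_order all_algebra.
From mathcomp Require Import all_classical all_reals all_analysis.
From mathcomp Require Import measurable_realfun.
From mathcomp Require Import ring lra.
Import Order.TTheory GRing.Theory Num.Theory.
Import numFieldNormedType.Exports.
Local Open Scope classical_set_scope.
Local Open Scope ring_scope.
Section Abs.
Variable R : realType.
Implicit Types (p q r T U : {poly R}).

Definition mops (K : {poly R} -> R) (Q : nat -> {poly R}) :=
  is_MOPS (fun p q => K (p * q)) Q.

Lemma mops_size K Q n : mops K Q -> size (Q n) = n.+1.
Proof. by move=> h; have [_ hs _ _] := h n. Qed.
Arguments mops_size {K Q} n _.

Lemma mops_coef K Q n : mops K Q -> (Q n)`_n = 1.
Proof.
move=> h; have [/monicP hm hs _ _] := h n.
by move: hm; rewrite lead_coefE hs.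
Qed.
Arguments mops_coef {K Q} n _.

Lemma mops0 {K Q} : mops K Q -> Q 0%N = 1.
Proof.
move=> h; rewrite (size1_polyC (eq_leq (mops_size 0 h))).
by rewrite (mops_coef 0 h).
Qed.

Lemma coef_hi {p k j} : (size p <= k)%N -> (k <= j)%N -> p`_j = 0.
Proof. by move=> hs hj; apply: (leq_sizeP _ _ hs). Qed.

Section K.
Variable K : {poly R} -> R.
Hypothesis KD : forall p q, K (p + q) = K p + K q.
Hypothesis KZ : forall k p, K (k *: p) = k * K p.

Lemma K0 : K 0 = 0.
Proof. by have := KZ 0 0; rewrite scale0r mul0r. Qed.

Lemma KB p q : K (p - q) = K p - K q.
Proof. by rewrite KD -(scaleN1r q) KZ mulN1r. Qed.

Lemma orth {Q n q} : mops K Q -> (size q <= n)%N -> K (Q n * q) = 0.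
Proof.
move=> hQ.
suff H : forall k q, (size q <= k)%N -> (k <= n)%N -> K (Q n * q) = 0.
  by move=> hq; apply: (H n).
elim=> [|k IH] {}q hq hk.
  by move: hq; rewrite leqn0 size_poly_eq0 => /eqP ->; rewrite mulr0 K0.
have -> : q = (q - q`_k *: Q k) + q`_k *: Q k by rewrite subrK.
rewrite mulrDr KD -scalerAr KZ.
have [_ _ _ ho] := hQ n.
rewrite ho // mulr0 addr0.
apply: IH; last by apply: ltnW.
apply/leq_sizeP => j hj; rewrite coefB coefZ.
move: hj; rewrite leq_eqVlt => /orP [/eqP <-|hj].
  by rewrite (mops_coef k hQ) mulr1 subrr.
rewrite (coef_hi hq hj) (coef_hi (eq_leq (mops_size k hQ)) hj).
by rewrite mulr0 subr0.
Qed.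

Lemma orth0 {Q} m {r} : mops K Q -> (size r <= m)%N ->
  (forall k, (k < m)%N -> K (r * Q k) = 0) -> r = 0.
Proof.
move=> hQ; elim: m r => [|m IH] r hr ho.
  by apply/eqP; rewrite -size_poly_eq0 -leqn0.
have hr' : r - r`_m *: Q m = 0.
  apply: IH.
  - apply/leq_sizeP => j hj; rewrite coefB coefZ.
    move: hj; rewrite leq_eqVlt => /orP [/eqP <-|hj].
      by rewrite (mops_coef m hQ) mulr1 subrr.
    rewrite (coef_hi hr hj) (coef_hi (eq_leq (mops_size m hQ)) hj).
    by rewrite mulr0 subr0.
  - move=> k hk; rewrite mulrBl KB -scalerAl KZ.
    have [_ _ _ ho'] := hQ m.
    by rewrite ho' // mulr0 subr0; apply: ho; apply: ltnW.
have er : r = r`_m *: Q m by apply/eqP; rewrite -subr_eq0 hr'.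
have := ho m (ltnSn m); rewrite {1}er -scalerAl KZ => /eqP.
rewrite mulf_eq0 => /orP [/eqP h|]; last by have [_ _ /negbTE -> _] := hQ m.
by rewrite er h scale0r.
Qed.

Lemma decomp {Q n T} : mops K Q -> (size T <= n.+2)%N -> T`_n.+1 = 1 ->
  (forall q, (size q <= n)%N -> K (T * q) = 0) ->
  T = Q n.+1 + (T - Q n.+1)`_n *: Q n.
Proof.
move=> hQ hs hc ho.
apply/eqP; rewrite -subr_eq0; apply/eqP; apply: (orth0 n hQ).
  apply/leq_sizeP => j hj; rewrite !(coefB, coefD, coefZ, coefN).
  move: hj; rewrite leq_eqVlt => /orP [/eqP <-|hj].
    by rewrite (mops_coef n hQ) mulr1; ring.
  move: hj; rewrite leq_eqVlt => /orP [/eqP <-|hj].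
    rewrite hc (mops_coef n.+1 hQ) (coef_hi (eq_leq (mops_size n hQ))) //.
    by rewrite mulr0 addr0 subrr.
  rewrite (coef_hi hs hj) (coef_hi (eq_leq (mops_size n.+1 hQ)) hj).
  rewrite (coef_hi (eq_leq (mops_size n hQ))); last exact: ltnW.
  by rewrite mulr0 addr0 subrr.
move=> k hk; rewrite opprD addrA !mulrBl !KB -scalerAl KZ ho; last first.
  by rewrite (mops_size k hQ).
have [_ _ _ h1] := hQ n.+1; have [_ _ _ h2] := hQ n.
by rewrite h1 ?h2 // ?mulr0 ?subrr ?subr0 //; apply: ltnW.
Qed.

Lemma normU {Q n U} : mops K Q -> (size (U - Q n)%R <= n)%N ->
  K (Q n * U) = K (Q n * Q n).
Proof.
move=> hQ hs.
have -> : U = (U - Q n) + Q n by rewrite subrK.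
by rewrite mulrDr KD (orth hQ hs) add0r.
Qed.

End K.
End Abs.
Arguments mops0 {R K Q}.
Arguments coef_hi {R p k j}.
Arguments orth {R K} KD KZ {Q n q}.
Arguments orth0 {R K} KD KZ {Q} m {r}.
Arguments decomp {R K} KD KZ {Q n T}.
Arguments normU {R K} KD KZ {Q n U}.
Arguments mops {R}.
Arguments mops_size {R K Q} n _.
Arguments mops_coef {R K Q} n _.

Section Main.
Variable R : realType.
Implicit Types (p q r T U : {poly R}).
Variables (L M : {poly R} -> R) (c N : R).
Hypothesis LD : forall p q, L (p + q) = L p + L q.
Hypothesis LZ : forall k p, L (k *: p) = k * L p.
Hypothesis MD : forall p q, M (p + q) = M p + M q.
Hypothesis MZ : forall k p, M (k *: p) = k * M p.
Hypothesis MX : forall q, M (('X - c%:P) * q) = L q.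

Definition MN p := M p + N * p.[c].

Lemma MND p q : MN (p + q) = MN p + MN q.
Proof. by rewrite /MN MD hornerD; ring. Qed.

Lemma MNZ k p : MN (k *: p) = k * MN p.
Proof. by rewrite /MN MZ hornerZ; ring. Qed.

Variables P Qc QN : nat -> {poly R}.
Hypotheses (hP : mops L P) (hQc : mops M Qc) (hQN : mops MN QN).

Lemma sizeXq {q m} : (size q <= m)%N -> (size (('X - c%:P) * q)%R <= m.+1)%N.
Proof.
move=> h; apply: leq_trans (size_polyMleq _ _) _.
by rewrite size_XsubC add2n /= ltnS.
Qed.

Lemma QNdec m : QN m.+1 = P m.+1 + (QN m.+1 - P m.+1)`_m *: P m.
Proof.
apply: (decomp LD LZ hP).
- by rewrite (mops_size m.+1 hQN).
- exact: (mops_coef m.+1 hQN).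
move=> q hq; rewrite -MX.
have := orth MND MNZ (Q:=QN) (n:=m.+1) (q:=('X - c%:P) * q) hQN (sizeXq hq).
by rewrite /MN !hornerM hornerXsubC subrr !(mul0r, mulr0) addr0 mulrCA.
Qed.

Lemma Qcdec m : Qc m.+1 = P m.+1 + (Qc m.+1 - P m.+1)`_m *: P m.
Proof.
apply: (decomp LD LZ hP).
- by rewrite (mops_size m.+1 hQc).
- exact: (mops_coef m.+1 hQc).
move=> q hq; rewrite -MX.
have := orth MD MZ (Q:=Qc) (n:=m.+1) (q:=('X - c%:P) * q) hQc (sizeXq hq).
by rewrite mulrCA.
Qed.

Lemma QN_int m : MN (P m.+1) + (QN m.+1 - P m.+1)`_m * MN (P m) = 0.
Proof.
have [_ _ _ h] := hQN m.+1; have := h 0%N (ltn0Sn m).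
by rewrite (mops0 hQN) mulr1 {1}QNdec MND MNZ.
Qed.

Lemma Qc_int m : M (P m.+1) + (Qc m.+1 - P m.+1)`_m * M (P m) = 0.
Proof.
have [_ _ _ h] := hQc m.+1; have := h 0%N (ltn0Sn m).
by rewrite (mops0 hQc) mulr1 {1}Qcdec MD MZ.
Qed.

Lemma hid m : L (P m * P m) = (P m).[c] * M (P m.+1) - (P m.+1).[c] * M (P m).
Proof.
have e1 : M (P m.+1 * P m) = (P m).[c] * M (P m.+1).
  set T := P m %/ ('X - c%:P).
  rewrite {1}(divp_eq (P m) ('X - c%:P)) modp_XsubC -/T.
  rewrite mulrDr MD mulrA (mulrC (P m.+1 * T)) MX.
  rewrite (orth LD LZ hP); last first.
    by rewrite size_divp ?polyXsubC_eq0 // size_XsubC (mops_size m hP) subn1 /= leqW.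
  by rewrite add0r mulrC mul_polyC MZ.
have e2 : M (P m * P m.+1) = L (P m * P m) + (P m.+1).[c] * M (P m).
  set U := P m.+1 %/ ('X - c%:P).
  have eU : P m.+1 = U * ('X - c%:P) + (P m.+1).[c]%:P.
    by rewrite /U -modp_XsubC -divp_eq.
  have sU : size U = m.+1.
    by rewrite size_divp ?polyXsubC_eq0 // size_XsubC (mops_size m.+1 hP) subn1.
  have cU : U`_m = 1.
    have := mops_coef m.+1 hP; rewrite {1}eU coefD coefC /= mulrBr coefB coefMX coefMC /=.
    by rewrite (coef_hi (eq_leq sU) (leqnn _)) mul0r subr0 addr0.
  rewrite {1}eU mulrDr MD mulrA (mulrC (P m * U)) MX.
  rewrite (normU LD LZ hP); last first.
    apply/leq_sizeP => j hj; rewrite coefB.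
    move: hj; rewrite leq_eqVlt => /orP [/eqP <-|hj].
      by rewrite cU (mops_coef m hP) subrr.
    by rewrite (coef_hi (eq_leq sU) hj) (coef_hi (eq_leq (mops_size m hP)) hj) subrr.
  by rewrite (mulrC (P m) (_%:P)) mul_polyC MZ.
have : M (P m.+1 * P m) = M (P m * P m.+1) by rewrite mulrC.
by rewrite e1 e2 => ->; rewrite addrK.
Qed.

Lemma gamma_nz m b g : 'X * P m.+1 = P m.+2 + b *: P m.+1 + g *: P m -> g != 0.
Proof.
move=> hr.
have h1 : L (P m.+1 * ('X * P m)) = L (P m.+1 * P m.+1).
  apply: (normU LD LZ hP).
  apply/leq_sizeP => j hj; rewrite coefB coefXM.
  move: hj; rewrite leq_eqVlt => /orP [/eqP <-|hj].
    by rewrite /= (mops_coef m hP) (mops_coef m.+1 hP) subrr.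
  case: j hj => // j hj /=.
  rewrite (coef_hi (eq_leq (mops_size m hP)) hj).
  by rewrite (coef_hi (eq_leq (mops_size m.+1 hP)) hj) subrr.
have h2 : L (P m.+1 * ('X * P m)) = g * L (P m * P m).
  rewrite mulrCA mulrA hr !mulrDl !LD -!scalerAl !LZ.
  have [_ _ _ o2] := hP m.+2; have [_ _ _ o1] := hP m.+1.
  by rewrite o2 // o1 // mulr0 add0r add0r.
apply/negP => /eqP g0; have [_ _ + _] := hP m.+1.
by rewrite -h1 h2 g0 mul0r eqxx.
Qed.

End Main.
Lemma lam_alg (R : realType) (p0 p1 f0 f1 h k l N : R) : p1 != 0 -> f1 != 0 -> h != 0 ->
  h = p1 * f0 - p0 * f1 -> f0 + k * f1 = 0 -> (f0 + N * p0) + l * (f1 + N * p1) = 0 ->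
  1 + N * (- (p0 + k * p1) * p1 / h) != 0 ->
  l = (p0 / p1 - f0 / f1) / (1 + N * (- (p0 + k * p1) * p1 / h)) - p0 / p1.
Proof.
move=> p1nz f1nz hnz eh ek el hB.
have hk : k = - f0 / f1.
  apply: (mulIf f1nz); rewrite divfK //; apply/eqP.
  by rewrite -addr_eq0 addrC ek.
have eB : - (p0 + k * p1) * p1 / h = p1 / f1.
  rewrite hk; apply: (mulIf hnz); rewrite divfK // eh.
  by field.
rewrite eB in hB *.
have hden : f1 + N * p1 != 0.
  apply: contra hB => /eqP h0.
  have -> : 1 + N * (p1 / f1) = (f1 + N * p1) / f1 by field.
  by rewrite h0 mul0r.
have hl : l = - (f0 + N * p0) / (f1 + N * p1).
  apply: (mulIf hden); rewrite divfK //; apply/eqP.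
  by rewrite -addr_eq0 addrC el.
have -> : 1 + N * (p1 / f1) = (f1 + N * p1) / f1 by field.
rewrite hl; field.
by rewrite hden p1nz f1nz.
Qed.
Lemma alg1 (R : realType) (Ln Lm bt gm sg an am bn bm x u v Pn dPn du dv : R) :
  sg != 0 -> bm != 0 -> Lm != 0 -> gm != 0 -> Deltaf Ln Lm bt gm x != 0 ->
  Pn = (x - bt) * u - gm * v ->
  dPn = (an * Pn + bn * u) / sg ->
  du = (am * u + bm * v) / sg ->
  dv = (u + (x - bt) * du - dPn) / gm ->
  let C1 := C1f Ln gm sg an bm in
  let D1 := D1f Ln bt gm sg bn am bm x in
  let C2 := C2f Lm bt gm sg an bm x in
  let D2 := D2f Lm bt gm sg bn am bm x in
  - xif C1 D1 Ln Lm bt gm x * (Pn + Ln * u) + (dPn + Ln * du)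
      = etaf C1 D1 Ln Lm bt gm x * (u + Lm * v)
  /\ - etaf C2 D2 Ln Lm bt gm x * (u + Lm * v) + (du + Lm * dv)
      = xif C2 D2 Ln Lm bt gm x * (Pn + Ln * u).
Proof.
move=> sg0 bm0 Lm0 gm0 D0 -> -> -> -> /=.
have E : Deltaf Ln Lm bt gm x = (gm + Lm * (x - bt) + Ln * Lm) / gm.
  by rewrite /Deltaf /B2f; field; rewrite gm0 Lm0.
have E0 : gm + Lm * (x - bt) + Ln * Lm != 0.
  apply: contra D0; rewrite E => /eqP ->; by rewrite mul0r.
rewrite /xif /etaf E /C1f /D1f /C2f /D2f /B2f.
split; field; rewrite ?sg0 ?bm0 ?Lm0 ?gm0 ?E0 //.
Qed.
Section Meas.
Variables (R : realType) (mu : {measure set R -> \bar R}) (c e : R).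
Hypothesis e0 : 0 < e.
Hypothesis mu0 : mu (ball c e) = 0%E.
Hypothesis mom : forall k : nat, mu.-integrable setT (fun x : R => (x ^+ k)%:E).

Definition G := ~` ball c e.

Lemma mG : measurable G.
Proof. by apply: measurableC; exact: measurable_ball. Qed.

Lemma polyI (p : {poly R}) : mu.-integrable setT (fun x => (p.[x])%:E).
Proof.
apply: (@eq_integrable _ _ _ mu setT measurableT (fun x : R => \sum_(i < size p) (p`_i * x ^+ i)%:E)%E) => //.
  by move=> x _; rewrite sumEFin horner_coef.
apply: (integrable_sum measurableT) => i _.
apply: (@eq_integrable _ _ _ mu setT measurableT (fun x : R => (p`_i)%:E * (x ^+ i)%:E)%E) => //.
exact: (integrableZl measurableT).
Qed.

Lemma polyIG (p : {poly R}) : mu.-integrable G (fun x => (p.[x])%:E).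
Proof. exact: (integrableS measurableT mG (@subsetT _ _) (polyI p)). Qed.

Lemma measInv : measurable_fun setT (@GRing.inv R).
Proof.
have -> : [set: R] = [set x | x != 0] `|` [set 0].
  apply/seteqP; split => x //= _; case: (eqVneq x 0) => [->|h]; [by right|by left].
apply/measurable_funU.
- by apply: open_measurable; exact: open_neq.
- exact: measurable_set1.
split; last exact: measurable_fun_set1.
apply: open_continuous_measurable_fun; first exact: open_neq.
by move=> x; rewrite inE /= => hx; exact: inv_continuous.
Qed.

Lemma measV : measurable_fun setT (fun x : R => (x - c)^-1).
Proof.
have -> : (fun x : R => (x - c)^-1) = GRing.inv \o horner ('X - c%:P).
  by apply: funext => x /=; rewrite hornerXsubC.
apply: measurableT_comp; first exact: measInv.
exact: measurable_poly.
Qed.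

Lemma measPV (p : {poly R}) : measurable_fun setT (fun x => p.[x] / (x - c)).
Proof. by have := measurable_funM (@measurable_poly _ p setT) measV. Qed.

Lemma T2G f : measurable_fun setT f -> Rintegral mu setT f = Rintegral mu G f.
Proof.
move=> mf; rewrite [RHS]Rintegral_mkcond /Rintegral; congr fine.
apply: ae_eq_integral => //.
- exact/measurable_EFinP.
- apply/measurable_EFinP; apply/(measurable_restrictT f mG).
  exact: measurable_funS mf.
exists (ball c e); split => //; first exact: measurable_ball.
move=> x /= hx; apply: contrapT => nb; apply: hx => _.
by rewrite patchE mem_set.
Qed.

Lemma Gneq x : G x -> x - c != 0.
Proof.
move=> Gx; rewrite subr_eq0; apply/eqP => xc; apply: Gx; rewrite xc.
exact: ballxx.
Qed.

Lemma MIG (p : {poly R}) : mu.-integrable G (fun x => (p.[x] / (x - c))%:E).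
Proof.
apply: (le_integrable mG _ _ (integrableZl mG e^-1 (polyIG p))).
  apply/measurable_EFinP; exact: measurable_funS (measPV p).
move=> x Gx; rewrite -EFinM !abse_EFin lee_fin !normrM mulrC.
apply: ler_wpM2r => //.
rewrite normfV ger0_norm ?invr_ge0 ?(ltW e0) //.
rewrite lef_pV2 ?posrE ?normr_gt0 ?Gneq //.
rewrite leNgt; apply/negP => h; apply: Gx.
by rewrite /ball /= distrC.
Qed.

Definition Lf (p : {poly R}) := Rintegral mu G (fun x => p.[x]).
Definition Mf (p : {poly R}) := Rintegral mu G (fun x => p.[x] / (x - c)).

Lemma LfD p q : Lf (p + q) = Lf p + Lf q.
Proof.
rewrite /Lf -RintegralD; [|exact: mG|exact: polyIG|exact: polyIG].
by apply: eq_Rintegral => x _; rewrite hornerD.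
Qed.

Lemma LfZ k p : Lf (k *: p) = k * Lf p.
Proof.
rewrite /Lf -RintegralZl; [|exact: mG|exact: polyIG].
by apply: eq_Rintegral => x _; rewrite hornerZ.
Qed.

Lemma MfD p q : Mf (p + q) = Mf p + Mf q.
Proof.
rewrite /Mf -RintegralD; [|exact: mG|exact: MIG|exact: MIG].
by apply: eq_Rintegral => x _; rewrite hornerD mulrDl.
Qed.

Lemma MfZ k p : Mf (k *: p) = k * Mf p.
Proof.
rewrite /Mf -RintegralZl; [|exact: mG|exact: MIG].
by apply: eq_Rintegral => x _; rewrite hornerZ mulrA.
Qed.

Lemma MfX q : Mf (('X - c%:P) * q) = Lf q.
Proof.
apply: eq_Rintegral => x /set_mem Gx.
rewrite hornerM hornerXsubC; field; exact: Gneq.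
Qed.

Lemma ip_muE p q : ip_mu mu p q = Lf (p * q).
Proof.
rewrite /ip_mu /Lf.
have -> : (fun x => p.[x] * q.[x]) = (fun x => (p * q).[x]).
  by apply: funext => x; rewrite hornerM.
exact: T2G (@measurable_poly _ _ setT).
Qed.

Lemma ip_nuE p q : ip_nu mu c p q = Mf (p * q).
Proof.
rewrite /ip_nu /Mf.
have -> : (fun x => p.[x] * q.[x] / (x - c)) = (fun x => (p * q).[x] / (x - c)).
  by apply: funext => x; rewrite hornerM.
exact: T2G (measPV _).
Qed.

Lemma FstE (P : nat -> {poly R}) k : Fst mu P k c = Mf (P k).
Proof. exact: T2G (measPV _). Qed.

End Meas.
Theorem theorem4 (R : realType) (mu : {measure set R -> \bar R})
  (mu_ac : mu `<< (@lebesgue_measure R))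
  (mu_moments : forall k : nat, mu.-integrable setT (fun x : R => (x ^+ k)%:E))
  (mu_infinite : ~ finite_set (msupp mu))
  (c : R) (hc : ~ msupp mu c) (N : R) (hN : 0 < N)
  (P Qc QN : nat -> {poly R})
  (hP : is_MOPS (ip_mu mu) P)
  (hQc : is_MOPS (ip_nu mu c) Qc)
  (hQN : is_MOPS (ip_nuN mu c N) QN)
  (beta gamma : nat -> R)
  (rec0 : 'X * P 0%N = P 1%N + beta 0%N *: P 0%N)
  (rec : forall m : nat,
     'X * P m.+1 = P m.+2 + beta m.+1 *: P m.+1 + gamma m.+1 *: P m)
  (sigma : {poly R}) (a b : nat -> {poly R}) (sigma_nz : sigma != 0)
  (struct : forall m : nat, (0 < m)%N ->
     sigma * (P m)^`() = a m * P m + b m * P m.-1)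
  (deg_bounded : exists d : nat, forall m : nat,
     (size (a m) <= d)%N /\ (size (b m) <= d)%N)
  (n : nat) (hn : (2 <= n)%N)
  (* the displayed quantities are defined *)
  (def_P1 : (P n.-1).[c] != 0) (def_P2 : (P n.-2).[c] != 0)
  (def_F1 : Fm1 mu P n c != 0) (def_F2 : Fm1 mu P n.-1 c != 0)
  (def_B1 : 1 + N * Bc mu P Qc c n != 0)
  (def_B2 : 1 + N * Bc mu P Qc c n.-1 != 0)
  (def_L : Lambda mu P Qc c N n.-1 != 0)
  (def_b : b n.-1 != 0) :
  let Ln := Lambda mu P Qc c N n in
  let Lm := Lambda mu P Qc c N n.-1 in
  let bt := beta n.-1 in
  let gm := gamma n.-1 in
  size (DeltaP Ln Lm bt gm) = 2%N /\
  forall x : R,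
    sigma.[x] != 0 -> (b n.-1).[x] != 0 -> Deltaf Ln Lm bt gm x != 0 ->
    let sg := sigma.[x] in
    let an := (a n).[x] in let am := (a n.-1).[x] in
    let bn := (b n).[x] in let bm := (b n.-1).[x] in
    let C1 := C1f Ln gm sg an bm in
    let D1 := D1f Ln bt gm sg bn am bm x in
    let C2 := C2f Lm bt gm sg an bm x in
    let D2 := D2f Lm bt gm sg bn am bm x in
    (* a_n [Q_n^{c,N}] = eta_1 Q_{n-1}^{c,N} *)
    - xif C1 D1 Ln Lm bt gm x * (QN n).[x] + (QN n)^`().[x]
      = etaf C1 D1 Ln Lm bt gm x * (QN n.-1).[x]
    /\
    (* a_n^dagger [Q_{n-1}^{c,N}] = xi_2 Q_n^{c,N} *)
    - etaf C2 D2 Ln Lm bt gm x * (QN n.-1).[x] + (QN n.-1)^`().[x]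
      = xif C2 D2 Ln Lm bt gm x * (QN n).[x].
Proof.
move=> Ln Lm bt gm.
have [e [e0 mu0]] : exists e : R, 0 < e /\ mu (ball c e) = 0%E.
  apply: contrapT => hne; apply: hc => e e0.
  rewrite lt_neqAle measure_ge0 andbT eq_sym; apply/eqP => h.
  by apply: hne; exists e.
set L := @Lf _ mu c e.
set M := @Mf _ mu c e.
have LD : forall p q, L (p + q) = L p + L q by move=> p q; exact: LfD.
have LZ : forall k p, L (k *: p) = k * L p by move=> k p; exact: LfZ.
have MD : forall p q, M (p + q) = M p + M q by move=> p q; exact: MfD.
have MZ : forall k p, M (k *: p) = k * M p by move=> k p; exact: MfZ.
have MX : forall q, M (('X - c%:P) * q) = L q by move=> q; exact: MfX.
have EL : ip_mu mu = fun p q => L (p * q).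
  by apply/funext => p; apply/funext => q; exact: ip_muE.
have EM : ip_nu mu c = fun p q => M (p * q).
  by apply/funext => p; apply/funext => q; exact: ip_nuE.
have EN : ip_nuN mu c N = fun p q => @MN _ M c N (p * q).
  apply/funext => p; apply/funext => q.
  by rewrite /ip_nuN EM /MN hornerM mulrA.
have EF : forall k, Fst mu P k c = M (P k) by move=> k; exact: FstE.
have hP' : mops L P by rewrite /mops -EL.
have hQc' : mops M Qc by rewrite /mops -EM.
have hQN' : mops (@MN _ M c N) QN by rewrite /mops -EN.
move: def_P1 def_P2 def_F1 def_F2 def_B1 def_B2 def_L def_b.
rewrite /Ln /Lm /bt /gm {Ln Lm bt gm}.
case: n hn => [|[|m]] // _ /= dP1 dP2 dF1 dF2 dB1 dB2 dL db.
have hdecN := @QNdec _ L M c N LD LZ MD MZ MX P QN hP' hQN'.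
have hdecC := @Qcdec _ L M c LD LZ MD MZ MX P Qc hP' hQc'.
have hintN := @QN_int _ L M c N LD LZ MD MZ MX P QN hP' hQN'.
have hintC := @Qc_int _ L M c LD LZ MD MZ MX P Qc hP' hQc'.
have hh := @hid _ L M c LD LZ MD MZ MX P hP'.
have hnorm : forall k, L (P k * P k) != 0 by move=> k; have [_ _ + _] := hP' k.
have lamE : forall k, (P k).[c] != 0 -> Fst mu P k c != 0 ->
    1 + N * Bc mu P Qc c k.+1 != 0 ->
    (QN k.+1 - P k.+1)`_k = Lambda mu P Qc c N k.+1.
  move=> k p1 f1 hB.
  move: hB; rewrite /Lambda /Bc /= !EF EL /= (hdecC k) hornerD hornerZ => hB.
  rewrite EF in f1.
  apply: lam_alg => //.
  exact: (hintN k).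
have eLn := lamE m.+1 dP1 dF1 dB1.
have eLm := lamE m dP2 dF2 dB2.
have hN2 := hdecN m.+1; rewrite eLn in hN2.
have hN1 := hdecN m; rewrite eLm in hN1.
have gnz : gamma m.+1 != 0 := @gamma_nz _ L LD LZ P hP' m _ _ (rec m).
set Ln := Lambda mu P Qc c N m.+2 in hN2 *.
set Lm := Lambda mu P Qc c N m.+1 in hN1 dL *.
split.
  have hLg : Lm / gamma m.+1 != 0 by rewrite mulf_neq0 ?invr_eq0.
  have -> : DeltaP Ln Lm (beta m.+1) (gamma m.+1) =
      (Lm / gamma m.+1)%:P * 'X
      + (Lm * (1 / Lm) - Lm / gamma m.+1 * beta m.+1 + Ln * Lm / gamma m.+1)%:P.
    rewrite /DeltaP !(polyCD, polyCN, polyCM, polyC1); ring.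
  by rewrite size_MXaddC polyC_eq0 (negbTE hLg) /= size_polyC hLg.
move=> x sx bx Dx.
have eP : (P m.+2).[x] = (x - beta m.+1) * (P m.+1).[x] - gamma m.+1 * (P m).[x].
  have := congr1 (fun p => p.[x]) (rec m).
  rewrite /= !(hornerM, hornerD, hornerZ, hornerX) => h.
  transitivity (x * (P m.+1).[x] - beta m.+1 * (P m.+1).[x] - gamma m.+1 * (P m).[x]).
    by rewrite h; ring.
  ring.
have edPn : (P m.+2)^`().[x] =
    ((a m.+2).[x] * (P m.+2).[x] + (b m.+2).[x] * (P m.+1).[x]) / sigma.[x].
  have := congr1 (fun p => p.[x]) (struct m.+2 erefl).
  rewrite /= !(hornerM, hornerD) => <-; field; exact: sx.
have edu : (P m.+1)^`().[x] =
    ((a m.+1).[x] * (P m.+1).[x] + (b m.+1).[x] * (P m).[x]) / sigma.[x].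
  have := congr1 (fun p => p.[x]) (struct m.+1 erefl).
  rewrite /= !(hornerM, hornerD) => <-; field; exact: sx.
have edv : (P m)^`().[x] = ((P m.+1).[x] + (x - beta m.+1) * (P m.+1)^`().[x]
    - (P m.+2)^`().[x]) / gamma m.+1.
  have := congr1 (fun p => (p^`()).[x]) (rec m).
  rewrite /= derivM derivX !derivD !derivZ.
  rewrite !(hornerM, hornerD, hornerZ, hornerX, hornerC, mul1r) => h.
  apply: (mulIf gnz); rewrite divfK //.
  transitivity ((P m.+1).[x] + x * (P m.+1)^`().[x] - (P m.+2)^`().[x]
     - beta m.+1 * (P m.+1)^`().[x]); last by ring.
  by rewrite h; ring.
rewrite hN2 hN1 !derivD !derivZ !hornerD !hornerZ.
exact: (alg1 _ _ _ _ _ _ _ _ _ _ _ _ _ _ _ _ _ sx bx dL gnz Dx eP edPn edu edv).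
Qed.
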